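(* Let $n,t$ be integers with $4\leq t\leq \frac{n+2}{2}$, and let $T_n^*$ be any tree of the form described below with these $n,t$. Then $\kappa^1(T_n^* )=n-t$.
   Context: For a connected graph $G=(V,E)$: a set $F\subseteq V$ is a $1$-good-neighbor faulty set if every vertex of $V-F$ has at least one neighbor in $V-F$; a $1$-good-neighbor cut is such an $F$ with $G-F$ disconnected; $\kappa^1(G)$ is the minimum cardinality of a $1$-good-neighbor cut. The tree $T_n^*$: let $K_{1,n-t-1}$ be a star with center $v$ and leaves $u_1,\dots,u_{n-t-1}$; let $r\ge 2$ and $a_1,\dots,a_r\ge 2$ be integers with $\sum_{i=1}^r a_i=t$, and let $K_{1,a_1-1},\dots,K_{1,a_r-1}$ be pairwise disjoint stars (disjoint from the first) with centers $w_1,\dots,w_r$; $T_n^*$ is the tree of order $n$ obtained by adding the edges $vw_1,\dots,vw_r$. *)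

(* Defs.v *)
From mathcomp Require Import all_boot.
Set Implicit Arguments. Unset Strict Implicit. Unset Printing Implicit Defensive.

Section GoodNeighbor.
Variables (T : finType) (e : rel T).

Definition del_rel (F : {set T}) : rel T :=
  [rel x y | [&& e x y, x \notin F & y \notin F]].

Definition good1 (F : {set T}) : bool :=
  [forall x in ~: F, exists y in ~: F, e x y].

Definition connected_del (F : {set T}) : bool :=
  [forall x in ~: F, forall y in ~: F, connect (del_rel F) x y].

Definition good1_cut (F : {set T}) : bool := good1 F && ~~ connected_del F.

(* kappa^1(G): minimum cardinality of a 1-good-neighbor cut
   (default #|T| if there is none; the theorem's value n - t < n excludes this) *)
Definition kappa1 : nat :=
  \big[minn/#|T|]_(F : {set T} | good1_cut F) #|F|.
End GoodNeighbor.

(* Vertices: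
   None                 = v (center of K_{1,n-t-1})
   Some (inl k)         = u_k, k < n-t-1
   Some (inr (i; 0))    = w_i (center of the i-th star K_{1,a_i - 1})
   Some (inr (i; j)), 0 < j < a_i = the a_i - 1 leaves of the i-th star. *)
Definition Tvert (n t r : nat) (a : 'I_r -> nat) : finType :=
  option ('I_(n - t - 1) + {i : 'I_r & 'I_(a i)})%type.

Definition Tadj (n t r : nat) (a : 'I_r -> nat) : rel (Tvert n t a) :=
  fun x y =>
    match x, y with
    | None, Some (inl _) => true
    | Some (inl _), None => true
    | None, Some (inr q) => val (tagged q) == 0
    | Some (inr p), None => val (tagged p) == 0
    | Some (inr p), Some (inr q) =>
        (tag p == tag q) && ((val (tagged p) == 0) (+) (val (tagged q) == 0))
    | _, _ => false
    end.

(* Main.v *)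
Require Import Defs.
From mathcomp Require Import all_boot.
From mathcomp Require Import zify.

Lemma bigmin_le (I : finType) (P : pred I) (F : I -> nat) x i0 :
  P i0 -> \big[minn/x]_(i | P i) F i <= F i0.
Proof.
move=> Pi; have: i0 \in index_enum I by rewrite mem_index_enum.
elim: (index_enum I) => // j s IH.
rewrite big_cons in_cons => /orP [/eqP <-|/IH h]; first by rewrite Pi geq_minl.
case: (P j) => //; exact: leq_trans (geq_minr _ _) h.
Qed.

Section Proof.
Variables (n t r : nat) (a : 'I_r -> nat).
Notation T := (Tvert n t a).
Notation E := (@Tadj n t r a).

Definition S0 : {set T} := None |: [set Some (inl k) | k : 'I_(n - t - 1)].

Lemma S0_card : #|S0| = (n - t - 1).+1.
Proof.
rewrite /S0 cardsU1 card_imset; last by move=> x y [].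
rewrite card_ord; case: imsetP => //= -[k _] //.
Qed.

Lemma inr_notin_S0 p : (Some (inr p) : T) \notin S0.
Proof.
rewrite /S0 in_setU1 /=; apply/imsetP => -[k _] //.
Qed.

Lemma None_in_S0 : (None : T) \in S0.
Proof. by rewrite /S0 in_setU1 eqxx. Qed.

Lemma E_sym : symmetric E.
Proof.
move=> [[k|p]|] [[l|q]|] //=; by rewrite eq_sym addbC.
Qed.

Lemma del_relE F x y : del_rel E F x y = [&& E x y, x \notin F & y \notin F].
Proof. by []. Qed.

Lemma del_sym F : symmetric (del_rel E F).
Proof. move=> x y; rewrite !del_relE; have -> : E x y = E y x by apply: E_sym. by case: (E y x); case: (x \in F); case: (y \in F). Qed.

Lemma lower F : good1_cut E F -> #|S0| <= #|F|.
Proof.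
case/andP => g nc; apply: subset_leq_card.
have vF : (None : T) \in F.
  apply/negPn/negP => vn; move/negP: nc; apply.
  have toV : forall x, x \notin F -> connect (del_rel E F) x None.
    move=> [[k|[i j]]|] xF //.
    - by apply: connect1; rewrite del_relE /= xF vn.
    - case: (eqVneq (val j) 0) => j0.
        by apply: connect1; rewrite del_relE /= xF vn /= j0.
      move/forallP: g => /(_ (Some (inr (Tagged (fun i => 'I_(a i)) j)))).
      rewrite in_setC xF /= => /existsP [y /andP [yF]].
      rewrite in_setC in yF.
      case: y yF => [[l|[i' j']]|] //= yF; last by rewrite (negbTE j0).
      case/andP => ii'; rewrite (negbTE j0) /= => j'0.
      apply: (@connect_trans _ _ (Some (inr (Tagged (fun i => 'I_(a i)) j')))).
        by apply: connect1; rewrite del_relE /= xF yF /= ii' (negbTE j0) j'0.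
      by apply: connect1; rewrite del_relE /= yF vn /= j'0.
  apply/forallP => x; apply/implyP; rewrite in_setC => xF.
  apply/forallP => y; apply/implyP; rewrite in_setC => yF.
  apply: connect_trans (toV _ xF) _.
  by rewrite (sym_connect_sym (del_sym F)) toV.
apply/subsetP => x; rewrite /S0 in_setU1 => /orP [/eqP -> //|/imsetP [k _ ->]].
apply/negPn/negP => kF.
move/forallP: g => /(_ (Some (inl k))); rewrite in_setC kF /=.
case/existsP => y /andP [yF]; rewrite in_setC in yF.
by case: y yF => [[l|q]|] //; rewrite vF.
Qed.

Hypothesis a2 : forall i, 2 <= a i.
Hypothesis r2 : 2 <= r.

Lemma S0_cut : good1_cut E S0.
Proof.
apply/andP; split.
  apply/forallP => x; apply/implyP; rewrite in_setC.
  case: x => [[k|[i j]]|]; rewrite /S0 ?in_setU1 ?eqxx //.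
    by move/negP; case; apply/orP; right; apply/imsetP; exists k.
  move=> _; have ai := a2 i.
  case: (eqVneq (val j) 0) => j0.
    apply/existsP; exists (Some (inr (Tagged (fun i => 'I_(a i)) (Ordinal ai)))).
    by rewrite in_setC inr_notin_S0 /= eqxx j0.
  have ai0 : 0 < a i by apply: leq_trans ai.
  apply/existsP; exists (Some (inr (Tagged (fun i => 'I_(a i)) (Ordinal ai0)))).
  by rewrite in_setC inr_notin_S0 /= eqxx (negbTE j0).
have r0 : 0 < r by apply: leq_trans r2.
pose i0 : 'I_r := Ordinal r0.
pose i1 : 'I_r := Ordinal r2.
have a0 : forall i, 0 < a i by move=> i; apply: leq_trans (a2 i).
pose x : T := Some (inr (Tagged (fun i => 'I_(a i)) (Ordinal (a0 i0)))).
pose y : T := Some (inr (Tagged (fun i => 'I_(a i)) (Ordinal (a0 i1)))).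
apply/negP => /forallP /(_ x) /implyP; rewrite in_setC inr_notin_S0 => /(_ isT).
move/forallP => /(_ y) /implyP; rewrite in_setC inr_notin_S0 => /(_ isT).
pose P : pred T := fun z => if z is Some (inr p) then tag p == i0 else false.
have cl : closed (del_rel E S0) P.
  move=> [[k|p]|] [[l|q]|] //=; rewrite del_relE /= ?inr_notin_S0 ?None_in_S0 ?andbF //=.
  rewrite andbT => /andP [/eqP e _]; by rewrite !unfold_in /= e.
move/(closed_connect cl); rewrite !unfold_in /= eqxx => /esym /eqP.
by move/(congr1 val).
Qed.

End Proof.

Theorem lemma3p1 (n t r : nat) (a : 'I_r -> nat) :
  4 <= t -> 2 * t <= n + 2 ->
  2 <= r -> (forall i, 2 <= a i) -> \sum_(i < r) a i = t ->
  kappa1 (@Tadj n t r a) = n - t.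
Proof.
move=> t4 nt r2 a2 _.
have e : n - t = (n - t - 1).+1 by lia.
rewrite e -(@S0_card n t r a); apply/eqP; rewrite eqn_leq; apply/andP; split.
  rewrite /kappa1; apply: bigmin_le; exact: S0_cut.
rewrite /kappa1; apply: (big_ind (fun m => #|@S0 n t r a| <= m)).
- exact: max_card.
- by move=> x y; rewrite leq_min => -> ->.
- exact: lower.
Qed.
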